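(* Let $P\subseteq\mathbb{R}^d$ be a $d$-dimensional lattice polytope and let $\operatorname{Pyr}(P)=\operatorname{conv}(P\times\{1\},\{0\})\subseteq\mathbb{R}^d\times\mathbb{R}$ be the lattice pyramid over $P$. Then $$\mu^F(\operatorname{Pyr}(P))=\max\{2,\ \mu^F(P)+1\}.$$
   Context: For a $d$-dimensional rational polytope $P\subseteq\mathbb{R}^d$ and $a\in(\mathbb{Z}^d)^*$ let $h_P(a)=\min_{x\in P}\langle a,x\rangle$. For $s>0$ the Fine adjoint polytope is $P^{F(s)}=\{x\in\mathbb{R}^d : \langle a,x\rangle\ge h_P(a)+s \text{ for all } a\in(\mathbb{Z}^d)^*\setminus\{0\}\}$. The Fine $\mathbb{Q}$-codegree is $\mu^F(P)=(\sup\{s>0 : P^{F(s)}\neq\emptyset\})^{-1}$. A lattice polytope has vertices in $\mathbb{Z}^d$. *)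

(* Defs.v *)
From HB Require Import structures.
From mathcomp Require Import all_boot all_order all_algebra.
From mathcomp Require Import classical_sets reals.
Set Implicit Arguments. Unset Strict Implicit. Unset Printing Implicit Defensive.
Import Order.TTheory GRing.Theory Num.Theory.
Local Open Scope ring_scope.
Local Open Scope classical_set_scope.

Section Polytopes.
Variable R : realType.

Definition vec (d : nat) := 'I_d -> R.
Definition ivec (d : nat) := 'I_d -> int.

Definition ivec_to_vec d (v : ivec d) : vec d := fun i => (v i)%:~R.

Definition pairing d (a : ivec d) (x : vec d) : R := \sum_(i < d) (a i)%:~R * x i.

Definition conv d (V : seq (ivec d)) : set (vec d) :=
  [set x | exists w : 'I_(size V) -> R,
     (forall k, 0 <= w k) /\ \sum_k w k = 1 /\
     forall i, x i = \sum_k w k * (ivec_to_vec (nth (fun=> 0) V k) i)].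

(* conv(V) is d-dimensional: its affine hull (that of V) is all of R^d *)
Definition full_dim d (V : seq (ivec d)) : Prop :=
  forall x : vec d, exists w : 'I_(size V) -> R,
     \sum_k w k = 1 /\
     forall i, x i = \sum_k w k * (ivec_to_vec (nth (fun=> 0) V k) i).

(* h_P(a) = min_{x in P} <a,x>  (the min is attained, so it equals the inf) *)
Definition hP d (P : set (vec d)) (a : ivec d) : R :=
  inf [set pairing a x | x in P].

Definition fine_adjoint d (P : set (vec d)) (s : R) : set (vec d) :=
  [set x | forall a : ivec d, (exists i, a i != 0) -> hP P a + s <= pairing a x].

Definition fine_codegree d (P : set (vec d)) : R :=
  (sup [set s | 0 < s /\ fine_adjoint P s !=set0])^-1.

Definition ext_ivec d (v : ivec d) (c : int) : ivec d.+1 :=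
  fun i => match unlift ord_max i with Some j => v j | None => c end.

Definition pyr_vertices d (V : seq (ivec d)) : seq (ivec d.+1) :=
  (fun=> 0) :: map (fun v => ext_ivec v 1) V.

End Polytopes.

(* Main.v *)
Require Import Defs.
From HB Require Import structures.
From mathcomp Require Import all_boot all_order all_algebra.
From mathcomp Require Import boolp classical_sets reals.
From mathcomp Require Import ring lra zify.
Set Implicit Arguments. Unset Strict Implicit. Unset Printing Implicit Defensive.
Import Order.TTheory GRing.Theory Num.Theory.
Local Open Scope ring_scope.
Local Open Scope classical_set_scope.

Section S.
Variable R : realType.

Definition vk d (V : seq (ivec d)) (k : nat) : vec R d := ivec_to_vec R (nth (fun=> 0) V k).

Lemma pairing_conv d (a : ivec d) (V : seq (ivec d)) (w : 'I_(size V) -> R) (x : vec R d) :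
  (forall i, x i = \sum_k w k * vk V k i) ->
  pairing a x = \sum_k w k * pairing a (vk V k).
Proof.
move=> Hx; rewrite /pairing.
under eq_bigr => i _ do rewrite Hx mulr_sumr.
rewrite exchange_big; apply: eq_bigr => k _; rewrite mulr_sumr.
by apply: eq_bigr => i _; rewrite mulrCA.
Qed.

Lemma pairing_int d (a : ivec d) (v : ivec d) :
  pairing a (ivec_to_vec R v) = (\sum_i a i * v i)%:~R.
Proof. by rewrite /pairing /ivec_to_vec rmorph_sum; apply: eq_bigr => i _; rewrite rmorphM. Qed.

Lemma vert_in_conv d (V : seq (ivec d)) (k : 'I_(size V)) : conv V (vk V k).
Proof.
exists (fun j => (j == k)%:R); split; first by move=> j; rewrite ler0n.
split; first by rewrite (bigD1 k) //= eqxx big1 ?addr0 // => j /negbTE ->.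
move=> i; rewrite (bigD1 k) //= big1 ?addr0 ?eqxx ?mul1r // => j /negbTE ->.
by rewrite mul0r.
Qed.

Lemma hP_min d (V : seq (ivec d)) (hV : (0 < size V)%N) (a : ivec d) :
  exists k : 'I_(size V), hP (conv V) a = pairing a (vk V k) /\
    forall x, conv V x -> pairing a (vk V k) <= pairing a x.
Proof.
pose k0 := Ordinal hV.
case: (@arg_minP _ _ _ k0 xpredT (fun k : 'I_(size V) => pairing a (vk V k)) isT) => k _ Hk.
have Hlb : forall x, conv V x -> pairing a (vk V k) <= pairing a x.
  move=> x [w [w0 [w1 Hx]]]; rewrite (pairing_conv a Hx).
  rewrite -[X in X <= _]mul1r -w1 mulr_suml; apply: ler_sum => j _.
  by rewrite ler_wpM2l // Hk.
exists k; split => //; apply/eqP; rewrite eq_le; apply/andP; split.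
  apply: (ge_inf (E := [set pairing a x | x in conv V])).
    by exists (pairing a (vk V k)) => _ [x Hx <-]; exact: Hlb.
  by exists (vk V k) => //; exact: vert_in_conv.
apply: lb_le_inf; first by exists (pairing a (vk V k)); exists (vk V k) => //; exact: vert_in_conv.
by move=> _ [x Hx <-]; exact: Hlb.
Qed.


Lemma pairing_ext d (a : ivec d) (x y : vec R d) : (forall i, x i = y i) -> pairing a x = pairing a y.
Proof. by move=> H; apply: eq_bigr => i _; rewrite H. Qed.

Definition wi d (a : ivec d.+1) : ivec d := fun i => a (widen_ord (leqnSn d) i).
Definition wv d (x : vec R d.+1) : vec R d := fun i => x (widen_ord (leqnSn d) i).

Lemma pairing_split d (a : ivec d.+1) (x : vec R d.+1) :
  pairing a x = pairing (wi a) (wv x) + (a ord_max)%:~R * x ord_max.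
Proof. by rewrite /pairing big_ord_recr. Qed.

Lemma ext_w d (v : ivec d) c i : ext_ivec v c (widen_ord (leqnSn d) i) = v i.
Proof.
have -> : widen_ord (leqnSn d) i = lift ord_max i by apply: val_inj; rewrite /= /bump leqNgt ltn_ord.
by rewrite /ext_ivec liftK.
Qed.

Lemma ext_max d (v : ivec d) c : ext_ivec v c ord_max = c.
Proof. by rewrite /ext_ivec unlift_none. Qed.

Lemma pairing0 d (a : ivec d) : pairing a (fun _ => 0 : R) = 0.
Proof. by rewrite /pairing big1 // => i _; rewrite mulr0. Qed.

Lemma pairing_a0 d (x : vec R d) : pairing (fun=> 0) x = 0.
Proof. by rewrite /pairing big1 // => i _; rewrite mul0r. Qed.

Lemma size_pyr d (V : seq (ivec d)) : size (pyr_vertices V) = (size V).+1.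
Proof. by rewrite /= size_map. Qed.

Lemma pyr_vert d (V : seq (ivec d)) (a : ivec d.+1) (j : nat) :
  pairing a (vk (pyr_vertices V) j) =
  if j is k.+1 then (if (k < size V)%N then pairing (wi a) (vk V k) + (a ord_max)%:~R else 0) else 0.
Proof.
case: j => [|k].
  rewrite (pairing_ext _ (y := fun _ => 0 : R)) ?pairing0 //.
rewrite /vk /=; case: ifP => Hk.
  rewrite pairing_split; congr (_ + _).
    apply: pairing_ext => i; rewrite /wv /ivec_to_vec (nth_map (fun=> 0)) //.
    by rewrite ext_w.
  by rewrite /ivec_to_vec (nth_map (fun=> 0)) // ext_max mulr1.
rewrite nth_default; last by rewrite size_map leqNgt Hk.
by rewrite (pairing_ext _ (y := fun _ => 0 : R)) ?pairing0.
Qed.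

Lemma vert_in_conv_nat d (V : seq (ivec d)) k : (k < size V)%N -> conv V (vk V k).
Proof. by move=> Hk; exact: (vert_in_conv (Ordinal Hk)). Qed.

Lemma hP_pyr d (V : seq (ivec d)) (hV : (0 < size V)%N) (a : ivec d.+1) :
  hP (@conv R _ (pyr_vertices V)) a = Num.min 0 (hP (@conv R _ V) (wi a) + (a ord_max)%:~R).
Proof.
have hV' : (0 < size (pyr_vertices V))%N by rewrite size_pyr.
have [k [-> Hk]] := hP_min hV' a.
have [k0 [-> Hk0]] := hP_min hV (wi a).
apply/eqP; rewrite eq_le; apply/andP; split.
  rewrite le_min; apply/andP; split.
    move: (Hk _ (@vert_in_conv_nat _ _ 0%N hV')).
    by rewrite [X in _ <= X]pyr_vert.
  have H1 : (k0.+1 < size (pyr_vertices V))%N by rewrite size_pyr ltnS.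
  move: (Hk _ (vert_in_conv_nat H1)).
  by rewrite [X in _ <= X]pyr_vert ltn_ord.
rewrite pyr_vert; case: (nat_of_ord k) => [|k']; first by rewrite ge_min lexx.
case: ifP => Hk'; last by rewrite ge_min lexx.
rewrite ge_min; apply/orP; right; rewrite lerD2r; apply: Hk0; exact: vert_in_conv_nat.
Qed.


Lemma pairing_exta d (a b : ivec d) (x : vec R d) : (forall i, a i = b i) -> pairing a x = pairing b x.
Proof. by move=> H; apply: eq_bigr => i _; rewrite H. Qed.

Lemma hP_zero d (V : seq (ivec d)) (hV : (0 < size V)%N) (b : ivec d) :
  (forall i, b i = 0) -> hP (@conv R _ V) b = 0.
Proof.
move=> Hb; have [k [-> _]] := hP_min hV b.
by rewrite (pairing_exta _ (b := fun=> 0)) // pairing_a0.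
Qed.

Lemma hP_int d (V : seq (ivec d)) (hV : (0 < size V)%N) (b : ivec d) :
  exists z : int, hP (@conv R _ V) b = z%:~R.
Proof. have [k [-> _]] := hP_min hV b; rewrite /vk pairing_int; by eexists. Qed.

Lemma pairing_scale d (b : ivec d) (x : vec R d) (t : R) :
  pairing b (fun i => t * x i) = t * pairing b x.
Proof. by rewrite /pairing mulr_sumr; apply: eq_bigr => i _; rewrite mulrCA. Qed.

Lemma ext_widen d (i : 'I_d) : unlift ord_max (widen_ord (leqnSn d) i) = Some i.
Proof.
have -> : widen_ord (leqnSn d) i = lift ord_max i by apply: val_inj; rewrite /= /bump leqNgt ltn_ord.
by rewrite liftK.
Qed.

Lemma int_cases (m : int) : (0 <= m) \/ (m <= -1).
Proof. by case: (lerP 0 m) => H; [left|right; rewrite -ltzD1 addrC subrr]. Qed.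

Lemma int_cases_R (m : int) : (0 <= (m%:~R : R)) \/ ((m%:~R : R) <= -1).
Proof.
case: (int_cases m) => H; [left; by rewrite ler0z | right].
by rewrite -(ler_int R) in H.
Qed.


Definition pyr_pt d (s : R) (y : vec R d) : vec R d.+1 :=
  fun i => match unlift ord_max i with Some j => (1 - s) * y j | None => 1 - s end.

Lemma lemB d (V : seq (ivec d)) (hV : (0 < size V)%N) (s : R) (y : vec R d) :
  0 < s -> 2 * s <= 1 -> fine_adjoint (@conv R _ V) (s / (1 - s)) y ->
  fine_adjoint (@conv R _ (pyr_vertices V)) s (pyr_pt s y).
Proof.
move=> s0 s2 Hy a Ha.
rewrite hP_pyr // pairing_split.
have -> : pairing (wi a) (wv (pyr_pt s y)) = (1 - s) * pairing (wi a) y.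
  rewrite -pairing_scale; apply: pairing_ext => i.
  by rewrite /wv /pyr_pt ext_widen.
have -> : pyr_pt s y ord_max = 1 - s by rewrite /pyr_pt unlift_none.
have s1 : 0 < 1 - s by lra.
have ss : (1 - s) * (s / (1 - s)) = s by rewrite mulrC divfK // lt0r_neq0.
have sp : 0 < s / (1 - s) by rewrite divr_gt0.
set c := a ord_max.
case: (pselect (exists i, wi a i != 0)) => Hb.
  have := Hy _ Hb; have [z ->] := hP_int hV (wi a) => Hz.
  set p := pairing (wi a) y in Hz *.
  set s' := s / (1 - s) in Hz ss sp.
  have Hpc : (1 - s) * (z%:~R + s') <= (1 - s) * p by rewrite ler_wpM2l // ltW.
  case: (int_cases_R (z + c)) => Hm; rewrite rmorphD /= in Hm.
    apply: (le_trans (y := 0 + s)); first by rewrite lerD2r ge_min lexx.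
    nra.
  apply: (le_trans (y := (z%:~R + c%:~R) + s)); first by rewrite lerD2r ge_min lexx orbT.
  nra.
have Hb0 : forall i, wi a i = 0.
  by move=> i; apply/eqP; apply: contra_notT Hb => H; exists i.
rewrite hP_zero // (pairing_exta _ (b := fun=> 0)) // pairing_a0 mulr0 !add0r.
have Hc : c != 0.
  case: Ha => i; case: (unliftP ord_max i) => [j ->|->] //.
  have := Hb0 j; rewrite /wi.
  have -> : widen_ord (leqnSn d) j = lift ord_max j by apply: val_inj; rewrite /= /bump leqNgt ltn_ord.
  by move=> ->; rewrite eqxx.
case: (int_cases_R c) => Hm.
  have Hm1 : 1 <= (c%:~R : R).
    have Hc1 : (1 <= c)%R by rewrite -gtz0_ge1 lt0r Hc -(ler0z R).
    by rewrite -(ler_int R) in Hc1.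
  apply: (le_trans (y := 0 + s)); first by rewrite lerD2r ge_min lexx.
  nra.
apply: (le_trans (y := c%:~R + s)); first by rewrite lerD2r ge_min lexx orbT.
nra.
Qed.


Lemma pairing_ext_ivec d (b : ivec d) (c : int) (x : vec R d.+1) :
  pairing (ext_ivec b c) x = pairing b (wv x) + c%:~R * x ord_max.
Proof.
rewrite pairing_split ext_max; congr (_ + _); apply: pairing_exta => i.
by rewrite /wi ext_w.
Qed.

Lemma hP_pyr_ext d (V : seq (ivec d)) (hV : (0 < size V)%N) (b : ivec d) (c : int) :
  hP (@conv R _ (pyr_vertices V)) (ext_ivec b c) = Num.min 0 (hP (@conv R _ V) b + c%:~R).
Proof.
rewrite hP_pyr // ext_max; congr (Num.min _ (_ + _)).
have -> : wi (ext_ivec b c) = b by apply/funext => i; rewrite /wi ext_w.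
by [].
Qed.

Lemma lemA d (V : seq (ivec d)) (hV : (0 < size V)%N) (s : R) (x : vec R d.+1) :
  0 < s -> fine_adjoint (@conv R _ (pyr_vertices V)) s x ->
  2 * s <= 1 /\ fine_adjoint (@conv R _ V) (s / (1 - s)) (fun i => wv x i / x ord_max).
Proof.
move=> s0 Hx.
set t := x ord_max.
have nz1 : forall c : int, c != 0 -> exists i, @ext_ivec d (fun=> 0) c i != 0.
  by move=> c Hc; exists ord_max; rewrite ext_max.
have H0 : forall c : int, c != 0 -> Num.min 0 c%:~R + s <= c%:~R * t.
  move=> c Hc; have := Hx _ (nz1 c Hc).
  rewrite hP_pyr_ext // pairing_ext_ivec hP_zero //.
  by rewrite pairing_a0 !add0r.
have Ht1 : s <= t.
  have := H0 1 isT; rewrite min_l ?ler0z // add0r mul1r.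
  done.
have Ht2 : t <= 1 - s.
  have := H0 (-1) isT; rewrite min_r ?lerz0 // rmorphN /= mulN1r; lra.
split; first lra.
move=> b Hb.
have [z Hz] := hP_int hV b.
have Hb' : exists i, ext_ivec b (- z) i != 0.
  by case: Hb => i Hi; exists (widen_ord (leqnSn d) i); rewrite ext_w.
have := Hx _ Hb'; rewrite hP_pyr_ext // Hz rmorphN /= subrr min_l // add0r.
rewrite pairing_ext_ivec -/t.
have -> : pairing b (fun i => wv x i / t) = t^-1 * pairing b (wv x).
  by rewrite -pairing_scale; apply: pairing_ext => i; rewrite mulrC.
set p := pairing b (wv x) => Hp.
have t0 : 0 < t by lra.
have s1 : 0 < 1 - s by lra.
have E1 : s / (1 - s) <= s / t.
  by rewrite ler_pdivrMr // mulrAC ler_pdivlMr // ler_pM2l.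
have E2 : z%:~R + s / t <= t^-1 * p.
  have -> : z%:~R + s / t = t^-1 * (z%:~R * t + s).
    by rewrite mulrDr mulrCA mulVf ?mulr1 ?lt0r_neq0 // mulrC.
  rewrite ler_pM2l ?invr_gt0 //; move: Hp; rewrite rmorphN /=; lra.
lra.
Qed.


Definition SP d (V : seq (ivec d)) := [set s : R | 0 < s /\ fine_adjoint (@conv R _ V) s !=set0].

Lemma SP_down d (V : seq (ivec d)) (q r : R) : SP V r -> 0 < q -> q <= r -> SP V q.
Proof.
move=> [r0 [y Hy]] q0 qr; split => //; exists y => a Ha.
apply: le_trans (Hy a Ha); by rewrite lerD2l.
Qed.

Lemma charac d (V : seq (ivec d)) (hV : (0 < size V)%N) (s : R) :
  SP (pyr_vertices V) s <-> (0 < s /\ 2 * s <= 1 /\ SP V (s / (1 - s))).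
Proof.
split.
  move=> [s0 [x Hx]]; have [H1 H2] := lemA hV s0 Hx.
  have s1 : 0 < 1 - s by lra.
  by split => //; split => //; split; [rewrite divr_gt0 | exists (fun i => wv x i / x ord_max)].
move=> [s0 [s2 [_ [y Hy]]]]; split => //; exists (pyr_pt s y); exact: lemB.
Qed.

Lemma sup_eq (S : set R) (m : R) : 0 < m -> (forall s, 0 < s -> s < m -> S s) ->
  (forall s, S s -> s <= m) -> sup S = m.
Proof.
move=> m0 Hin Hub.
have m2 : S (m / 2) by apply: Hin; lra.
have ne : S !=set0 by exists (m / 2).
have le1 : sup S <= m by apply: ge_sup.
have hs : has_sup S by split => //; exists m.
have ge1 : m / 2 <= sup S by apply: sup_upper_bound.
apply/eqP; rewrite eq_le le1 /=; rewrite leNgt; apply/negP => Hlt.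
have : S ((sup S + m) / 2) by apply: Hin; lra.
move/(sup_upper_bound hs); lra.
Qed.


Lemma SP0 (V : seq (ivec 0)) (s : R) : SP V s <-> 0 < s.
Proof.
split; first by case.
move=> s0; split => //; exists (fun _ => 0) => a [[i Hi] _]; by [].
Qed.

Lemma supSP0 (V : seq (ivec 0)) : sup (SP V) = 0.
Proof.
apply: sup_out => -[_ [u Hu]].
have : SP V (u * u + 1) by apply/SP0; nra.
move/Hu => /=; nra.
Qed.

Lemma pairing_oppa d (b : ivec d) (x : vec R d) : pairing (fun i => - b i) x = - pairing b x.
Proof. by rewrite /pairing -sumrN; apply: eq_bigr => i _; rewrite rmorphN mulNr. Qed.

Lemma SP_ub d (V : seq (ivec d.+1)) : exists u, forall s, SP V s -> s <= u.
Proof.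
pose b : ivec d.+1 := fun _ => 1.
have Hb : exists i, b i != 0 by exists ord0.
have Hb' : exists i, (fun i => - b i) i != 0 by exists ord0.
exists (- (hP (@conv R _ V) b + hP (@conv R _ V) (fun i => - b i)) / 2).
move=> s [s0 [y Hy]].
have := Hy _ Hb; have := Hy _ Hb'; rewrite pairing_oppa; lra.
Qed.


Lemma fd_size d (V : seq (ivec d)) : @full_dim R d V -> (0 < size V)%N.
Proof.
move=> HV; have [w [Hw _]] := HV (fun _ => 0).
rewrite lt0n; apply/negP => /eqP E; move: w Hw; rewrite E => w.
by rewrite big_ord0 => /eqP; rewrite eq_sym oner_eq0.
Qed.

Lemma nonconst d (V : seq (ivec d)) (HV : @full_dim R d V) (b : ivec d)
  (Hb : exists i, b i != 0) (h : R) : ~ (forall k : 'I_(size V), pairing b (vk V k) = h).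
Proof.
move=> Hall; case: Hb => i Hi.
pose x : vec R d := fun j => if j == i then (h + 1) / (b i)%:~R else 0.
have Hpx : pairing b x = h + 1.
  rewrite /pairing (bigD1 i) //= big1 => [|j /negbTE Hj].
    by rewrite /x eqxx addr0 mulrC divfK // intr_eq0.
  by rewrite /x Hj mulr0.
have [w [w1 Hw]] := HV x.
rewrite (@pairing_conv _ b V w x Hw) in Hpx.
rewrite (eq_bigr (fun k => w k * h)) in Hpx; last by move=> k _; rewrite Hall.
rewrite -mulr_suml w1 mul1r in Hpx; lra.
Qed.


Lemma bary d (V : seq (ivec d)) (HV : @full_dim R d V) : SP V ((size V)%:R^-1).
Proof.
have hV := fd_size HV.
set n := size V.
have n0 : (0 : R) < n%:R by rewrite ltr0n.
split; first by rewrite invr_gt0.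
exists (fun i => \sum_(k < n) n%:R^-1 * vk V k i) => b Hb.
rewrite (@pairing_conv _ b V (fun=> n%:R^-1) _ (fun i => erefl)).
have [k0 [-> Hlb]] := hP_min hV b.
set h := pairing b (vk V k0) in Hlb *.
have [k1 Hk1] : exists k1 : 'I_n, pairing b (vk V k1) != h.
  case: (pselect (exists k1 : 'I_n, pairing b (vk V k1) != h)) => // H.
  exfalso; apply: (nonconst HV Hb (h := h)) => k.
  by apply/eqP; apply: contra_notT H => Hne; exists k.
have Hge : h + 1 <= pairing b (vk V k1).
  have := Hlb _ (vert_in_conv k1).
  move: Hk1; rewrite /h /vk !pairing_int.
  set z0 := (\sum_i b i * _)%R; set z1 := (\sum_i b i * _)%R.
  rewrite eqr_int ler_int => Hne Hle.
  rewrite -[1]/(1%:~R) -rmorphD ler_int.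
  lia.
have HS : 1 <= \sum_(k < n) (pairing b (vk V k) - h).
  rewrite (bigD1 k1) //=; apply: le_trans (_ : pairing b (vk V k1) - h <= _).
    lra.
  rewrite lerDl; apply: sumr_ge0 => k _; rewrite subr_ge0; exact: Hlb (vert_in_conv k).
rewrite -mulr_sumr.
have -> : \sum_(k < n) pairing b (vk V k) = \sum_(k < n) (pairing b (vk V k) - h) + h * n%:R.
  by rewrite sumrB sumr_const card_ord mulr_natr subrK.
rewrite mulrDr [n%:R^-1 * (h * _)]mulrC -mulrA mulfV ?lt0r_neq0 // mulr1.
rewrite addrC lerD2r.
by rewrite -[X in X <= _]mulr1 ler_pM2l ?invr_gt0.
Qed.


End S.

Theorem mainTheorem5 (R : realType) (d : nat) (V : seq (ivec d)) :
  @full_dim R d V ->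
  fine_codegree (@conv R d.+1 (pyr_vertices V)) =
  Num.max 2 (fine_codegree (@conv R d V) + 1).
Proof.
move=> HV; have hV := fd_size HV.
change ((sup (@SP R _ (pyr_vertices V)))^-1 = Num.max 2 ((sup (@SP R _ V))^-1 + 1)).
case: d V HV hV => [|d'] V HV hV.
  rewrite supSP0 invr0 add0r.
  have -> : sup (@SP R _ (pyr_vertices V)) = 2^-1.
    apply: sup_eq; first by rewrite invr_gt0.
      move=> s s0 s2; apply/charac => //; split => //; split; first by lra.
      apply/SP0; rewrite divr_gt0 //; lra.
    by move=> s /charac => /(_ hV) [_ [H _]]; lra.
  by rewrite invrK max_l // ler1n.
set σ := sup (@SP R _ V).
have hs : has_sup (@SP R _ V).
  split; first by exists ((size V)%:R^-1); exact: bary.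
  by have [u Hu] := @SP_ub R _ V; exists u.
have σ0 : 0 < σ.
  have [Hp _] := bary HV.
  apply: (lt_le_trans Hp); apply: (sup_upper_bound hs); exact: bary.
have σ1 : 0 < 1 + σ by lra.
set q := σ / (1 + σ).
have q0 : 0 < q by rewrite divr_gt0.
have Hq : forall s, 0 < s -> s < 1 -> (s <= q) = (s / (1 - s) <= σ).
  move=> s s0 s1; rewrite ler_pdivlMr // ler_pdivrMr ?subr_gt0 //.
  apply/idP/idP => H; nra.
have Hq' : forall s, 0 < s -> s < 1 -> (s < q) = (s / (1 - s) < σ).
  move=> s s0 s1; rewrite ltr_pdivlMr // ltr_pdivrMr ?subr_gt0 //.
  apply/idP/idP => H; nra.
have -> : sup (@SP R _ (pyr_vertices V)) = Num.min 2^-1 q.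
  apply: sup_eq; first by rewrite lt_min invr_gt0 q0 andbT.
    move=> s s0; rewrite lt_min => /andP [s2 sq].
    apply/charac => //; split => //; split; first by lra.
    have s1 : s < 1 by lra.
    rewrite Hq' // in sq.
    have [r Hr Hlt] := sup_gt (ex_intro _ _ (bary HV)) sq.
    apply: SP_down Hr _ (ltW Hlt); rewrite divr_gt0 //; lra.
  move=> s /charac => /(_ hV) [s0 [s2 Hs]].
  rewrite le_min; apply/andP; split; first by lra.
  rewrite Hq //; last by lra.
  exact: sup_upper_bound hs _ Hs.
case: (lerP 1 σ) => Hσ.
  rewrite min_l; last by rewrite /q ler_pdivlMr //; lra.
  rewrite invrK max_l //.
  have : σ^-1 <= 1 by rewrite invf_le1.
  lra.
rewrite min_r; last by rewrite /q ltW // ltr_pdivrMr //; lra.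
rewrite /q invf_div mulrDl mul1r divff ?lt0r_neq0 // max_r //.
have : 1 <= σ^-1 by rewrite invf_ge1 // ltW.
lra.
Qed.
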